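(* Let $\Xi$ be a set in a normed space and let $\xi\mapsto\tilde A(\xi)\in\mathbb{R}^{n\times n}$ and $\xi\mapsto\tilde B(\xi)\in\mathbb{R}^{n\times m}$ be Lipschitz continuous with respect to the spectral norm, with Lipschitz constants $L_A$ and $L_B$ respectively. Fix $\alpha>0$, $r>0$, $\theta\in\mathbb{R}$ and $\mu>0$. For $P\in\mathbb{S}^n$, $Y\in\mathbb{R}^{m\times n}$, $\gamma\in\mathbb{R}$ set $X(\xi)=\tilde A(\xi)P-\tilde B(\xi)Y$ and define the matrix-valued constraint maps $$f_1(P,Y,\gamma,\xi)=X(\xi)+X(\xi)^T+2\alpha P-\gamma I,$$ $$f_2(P,Y,\gamma,\xi)=\begin{bmatrix}-rP & X(\xi)\\ X(\xi)^T & -rP\end{bmatrix}-\gamma I,$$ $$f_3(P,Y,\gamma,\xi)=\begin{bmatrix}\sin\theta\,(X(\xi)+X(\xi)^T) & \cos\theta\,(X(\xi)-X(\xi)^T)\\ \cos\theta\,(X(\xi)^T-X(\xi)) & \sin\theta\,(X(\xi)+X(\xi)^T)\end{bmatrix}-\gamma I.$$ Then each $f_k$, $k=1,2,3$, is Lipschitz continuous in $\xi$ (with respect to the spectral norm), uniformly over all $\gamma\in\mathbb{R}$ and all $P,Y$ satisfying $0\preceq P\preceq\mu I$ and $\|Y\|\le\mu$, with Lipschitz constant $$L=2\mu(L_A+L_B)\max\big(1,\ |\sin\theta|+|\cos\theta|\big),$$ i.e. $\|f_k(P,Y,\gamma,\xi_1)-f_k(P,Y,\gamma,\xi_2)\|\le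 L\|\xi_1-\xi_2\|$ for all $\xi_1,\xi_2\in\Xi$.
   Context: $\|\cdot\|$ denotes the spectral norm of a matrix; $\mathbb{S}^n$ is the set of real symmetric $n\times n$ matrices and $\preceq$ is the Loewner order. The maps $f_1,f_2,f_3$ encode the LMI constraints $f_k\prec 0$ of a regional pole-placement (D-stability) problem for the uncertain system $\dot x=\tilde A(\xi)x+\tilde B(\xi)u$, with parameters $\alpha$ (minimal decay), $r$ (disk radius) and $\theta$ (conic sector). *)

(* Defs.v *)
From HB Require Import structures.
From mathcomp Require Import all_boot all_order all_algebra.
From mathcomp Require Import all_classical all_reals all_analysis.
Set Implicit Arguments. Unset Strict Implicit. Unset Printing Implicit Defensive.
Import Order.TTheory GRing.Theory Num.Theory.
Import numFieldNormedType.Exports.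
Local Open Scope classical_set_scope.
Local Open Scope ring_scope.

Section Defs.
Variable R : realType.

Definition vnorm2 (k : nat) (v : 'cV[R]_k) : R :=
  Num.sqrt (\sum_(i < k) v i 0 ^+ 2).

Definition specnorm (p q : nat) (A : 'M[R]_(p, q)) : R :=
  sup [set vnorm2 (A *m x) | x in [set x : 'cV[R]_q | vnorm2 x <= 1]].

Definition loewner_le (n : nat) (P Q : 'M[R]_n) : Prop :=
  forall x : 'cV[R]_n, (x^T *m P *m x) 0 0 <= (x^T *m Q *m x) 0 0.

Definition Xmat (n m : nat) (At : 'M[R]_n) (Bt : 'M[R]_(n, m))
  (P : 'M[R]_n) (Y : 'M[R]_(m, n)) : 'M[R]_n := At *m P - Bt *m Y.

Definition f1 (n m : nat) (alpha : R) (P : 'M[R]_n) (Y : 'M[R]_(m, n)) (gamma : R)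
  (At : 'M[R]_n) (Bt : 'M[R]_(n, m)) : 'M[R]_n :=
  let X := Xmat At Bt P Y in X + X^T + (2 * alpha) *: P - gamma%:M.

Definition f2 (n m : nat) (r : R) (P : 'M[R]_n) (Y : 'M[R]_(m, n)) (gamma : R)
  (At : 'M[R]_n) (Bt : 'M[R]_(n, m)) : 'M[R]_(n + n) :=
  let X := Xmat At Bt P Y in
  block_mx (- (r *: P)) X X^T (- (r *: P)) - gamma%:M.

Definition f3 (n m : nat) (theta : R) (P : 'M[R]_n) (Y : 'M[R]_(m, n)) (gamma : R)
  (At : 'M[R]_n) (Bt : 'M[R]_(n, m)) : 'M[R]_(n + n) :=
  let X := Xmat At Bt P Y in
  block_mx (sin theta *: (X + X^T)) (cos theta *: (X - X^T))
           (cos theta *: (X^T - X)) (sin theta *: (X + X^T)) - gamma%:M.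

End Defs.

(* Main.v *)
Require Import Defs.
From HB Require Import structures.
From mathcomp Require Import all_boot all_order all_algebra.
From mathcomp Require Import all_classical all_reals all_analysis.
From mathcomp Require Import ring lra.
Set Implicit Arguments. Unset Strict Implicit. Unset Printing Implicit Defensive.
Import Order.TTheory GRing.Theory Num.Theory.
Import numFieldNormedType.Exports.
Local Open Scope classical_set_scope.
Local Open Scope ring_scope.

Section Aux.
Variable R : realType.

Definition dot (k : nat) (u v : 'cV[R]_k) : R := \sum_(i < k) u i 0 * v i 0.
Arguments dot {k}.

Lemma dotC k (u v : 'cV[R]_k) : dot u v = dot v u.
Proof. by apply: eq_bigr => i _; rewrite mulrC. Qed.

Lemma dotDr k (u v w : 'cV[R]_k) : dot u (v + w) = dot u v + dot u w.
Proof. by rewrite /dot -big_split; apply: eq_bigr => i _; rewrite !mxE mulrDr. Qed.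

Lemma dotNr k (u v : 'cV[R]_k) : dot u (- v) = - dot u v.
Proof. by rewrite /dot -sumrN; apply: eq_bigr => i _; rewrite !mxE mulrN. Qed.

Lemma dotBr k (u v w : 'cV[R]_k) : dot u (v - w) = dot u v - dot u w.
Proof. by rewrite dotDr dotNr. Qed.

Lemma dotZr k a (u v : 'cV[R]_k) : dot u (a *: v) = a * dot u v.
Proof. by rewrite /dot mulr_sumr; apply: eq_bigr => i _; rewrite !mxE mulrCA. Qed.

Lemma dotDl k (u v w : 'cV[R]_k) : dot (v + w) u = dot v u + dot w u.
Proof. by rewrite dotC dotDr !(dotC u). Qed.
Lemma dotNl k (u v : 'cV[R]_k) : dot (- v) u = - dot v u.
Proof. by rewrite dotC dotNr dotC. Qed.
Lemma dotBl k (u v w : 'cV[R]_k) : dot (v - w) u = dot v u - dot w u.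
Proof. by rewrite dotDl dotNl. Qed.
Lemma dotZl k a (u v : 'cV[R]_k) : dot (a *: v) u = a * dot v u.
Proof. by rewrite dotC dotZr dotC. Qed.
Lemma dot0l k (u : 'cV[R]_k) : dot 0 u = 0.
Proof. by rewrite /dot big1 // => i _; rewrite mxE mul0r. Qed.

Lemma dotvv_ge0 k (u : 'cV[R]_k) : 0 <= dot u u.
Proof. by apply: sumr_ge0 => i _; rewrite -expr2 sqr_ge0. Qed.

Lemma vnorm2E k (u : 'cV[R]_k) : vnorm2 u = Num.sqrt (dot u u).
Proof. by rewrite /vnorm2 /dot; congr Num.sqrt; apply: eq_bigr => i _; rewrite expr2. Qed.

Lemma vnorm2_ge0 k (u : 'cV[R]_k) : 0 <= vnorm2 u.
Proof. exact: sqrtr_ge0. Qed.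

Lemma sq_vnorm2 k (u : 'cV[R]_k) : vnorm2 u ^+ 2 = dot u u.
Proof. by rewrite vnorm2E sqr_sqrtr // dotvv_ge0. Qed.

Lemma dotvv_eq0 k (u : 'cV[R]_k) : dot u u = 0 -> u = 0.
Proof.
move=> /eqP; rewrite psumr_eq0 => [/allP H|i _]; last by rewrite -expr2 sqr_ge0.
apply/matrixP => i j; rewrite (ord1 j) !mxE.
have := H i (mem_index_enum _); rewrite /= mulf_eq0 orbb => /eqP ->; done.
Qed.

Lemma dot_mulmx p q (M : 'M[R]_(p, q)) (u : 'cV[R]_p) (v : 'cV[R]_q) :
  dot u (M *m v) = dot (M^T *m u) v.
Proof.
rewrite /dot.
under eq_bigr => i _ do rewrite mxE mulr_sumr.
under [RHS]eq_bigr => i _ do rewrite mxE mulr_suml.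
rewrite exchange_big /=; apply: eq_bigr => i _; apply: eq_bigr => j _.
by rewrite mxE mulrCA mulrA.
Qed.

Lemma CS k (u v : 'cV[R]_k) : `|dot u v| <= vnorm2 u * vnorm2 v.
Proof.
have [u0|] := eqVneq (dot u u) 0.
  by rewrite (dotvv_eq0 u0) dot0l normr0 mulr_ge0 ?vnorm2_ge0.
have [v0|] := eqVneq (dot v v) 0.
  by rewrite (dotvv_eq0 v0) dotC dot0l normr0 mulr_ge0 ?vnorm2_ge0.
move=> nv nu.
have ha := sq_vnorm2 u; have hb := sq_vnorm2 v.
have a0 : 0 < vnorm2 u.
  rewrite lt_neqAle vnorm2_ge0 andbT; apply/eqP => h.
  by move: nu; rewrite -ha -h expr0n eqxx.
have b0 : 0 < vnorm2 v.
  rewrite lt_neqAle vnorm2_ge0 andbT; apply/eqP => h.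
  by move: nv; rewrite -hb -h expr0n eqxx.
set a := vnorm2 u in ha a0 *; set b := vnorm2 v in hb b0 *.
have e1 := dotvv_ge0 (b *: u - a *: v).
have e2 := dotvv_ge0 (b *: u + a *: v).
rewrite !(dotBl, dotDl, dotBr, dotDr, dotZl, dotZr) (dotC v u) -ha -hb in e1 e2.
have ab0 : 0 < a * b by apply: mulr_gt0.
rewrite ler_norml; apply/andP; split; nra.
Qed.


Lemma vnorm20 k : vnorm2 (0 : 'cV[R]_k) = 0.
Proof. by rewrite vnorm2E dot0l sqrtr0. Qed.

Lemma dotr0 k (u : 'cV[R]_k) : dot u 0 = 0.
Proof. by rewrite dotC dot0l. Qed.

Lemma vnorm2Z k c (v : 'cV[R]_k) : vnorm2 (c *: v) = `|c| * vnorm2 v.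
Proof.
rewrite !vnorm2E dotZl dotZr mulrA -expr2 sqrtrM ?sqr_ge0 //.
by rewrite sqrtr_sqr.
Qed.

Lemma vnorm2_eq0 k (v : 'cV[R]_k) : vnorm2 v = 0 -> v = 0.
Proof.
move=> h; apply: dotvv_eq0; rewrite -sq_vnorm2 h expr0n //.
Qed.

Lemma bil_bound p q (M : 'M[R]_(p, q)) x c :
  (forall y, vnorm2 y <= 1 -> dot y (M *m x) <= c) -> vnorm2 (M *m x) <= c.
Proof.
move=> H.
have c0 : 0 <= c by have := H 0; rewrite dot0l; apply; rewrite vnorm20.
have [s0|sn0] := eqVneq (vnorm2 (M *m x)) 0; first by rewrite s0.
have sp : 0 < vnorm2 (M *m x) by rewrite lt_neqAle eq_sym sn0 vnorm2_ge0.
have := H ((vnorm2 (M *m x))^-1 *: (M *m x)).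
rewrite vnorm2Z dotZl -sq_vnorm2 ger0_norm ?invr_ge0 ?vnorm2_ge0 //.
rewrite mulVf // lexx expr2 mulrA mulVf // mul1r; apply; done.
Qed.

Lemma specnorm_le p q (M : 'M[R]_(p, q)) c :
  (forall x, vnorm2 x <= 1 -> vnorm2 (M *m x) <= c) -> specnorm M <= c.
Proof.
move=> H; apply: ge_sup.
  by exists (vnorm2 (M *m 0)); exists 0 => //=; rewrite vnorm20.
by move=> _ [x hx <-]; apply: H.
Qed.

Lemma coord_le k (y : 'cV[R]_k) i : y i 0 ^+ 2 <= dot y y.
Proof.
rewrite /dot (bigD1 i) //= expr2 lerDl; apply: sumr_ge0 => j _.
by rewrite -expr2 sqr_ge0.
Qed.

Lemma coord_le1 k (y : 'cV[R]_k) i : vnorm2 y <= 1 -> `|y i 0| <= 1.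
Proof.
move=> h; have := coord_le y i; rewrite -sq_vnorm2 => h2.
have h0 := vnorm2_ge0 y.
rewrite ler_norml; apply/andP; split; nra.
Qed.

Lemma specnorm_ub p q (M : 'M[R]_(p, q)) x :
  vnorm2 x <= 1 -> vnorm2 (M *m x) <= specnorm M.
Proof.
move=> hx; apply: sup_upper_bound; last by exists x.
split; first by exists (vnorm2 (M *m x)), x.
exists (\sum_i \sum_j `|M i j|) => _ [z hz <-].
apply: bil_bound => y hy.
rewrite /dot; apply: ler_sum => i _; rewrite mxE mulr_sumr; apply: ler_sum => j _.
have h1 := coord_le1 i hy; have h2 := coord_le1 j hz.
apply: (le_trans (ler_norm _)); rewrite !normrM.
rewrite mulrCA; apply: ler_piMr => //; apply: mulr_ile1 => //.
Qed.

Lemma homog p q (M : 'M[R]_(p, q)) c :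
  (forall x, vnorm2 x <= 1 -> vnorm2 (M *m x) <= c) ->
  forall v, vnorm2 (M *m v) <= c * vnorm2 v.
Proof.
move=> H v.
have c0 : 0 <= c by have := H 0; rewrite mulmx0 !vnorm20; apply.
have [s0|sn0] := eqVneq (vnorm2 v) 0.
  by rewrite (vnorm2_eq0 s0) mulmx0 !vnorm20 mulr0.
have sp : 0 < vnorm2 v by rewrite lt_neqAle eq_sym sn0 vnorm2_ge0.
have := H ((vnorm2 v)^-1 *: v).
rewrite vnorm2Z -scalemxAr vnorm2Z ger0_norm ?invr_ge0 ?vnorm2_ge0 // mulVf // lexx.
move=> /(_ isT); rewrite ler_pdivrMl // mulrC //.
Qed.

Lemma specnorm_homog p q (M : 'M[R]_(p, q)) v :
  vnorm2 (M *m v) <= specnorm M * vnorm2 v.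
Proof. by apply: homog => x; apply: specnorm_ub. Qed.

Lemma specnorm_ge0 p q (M : 'M[R]_(p, q)) : 0 <= specnorm M.
Proof.
have h := @specnorm_ub p q M 0; rewrite mulmx0 !vnorm20 in h; exact: h.
Qed.

Lemma quadE k (Q : 'M[R]_k) x : (x^T *m Q *m x) 0 0 = dot x (Q *m x).
Proof.
rewrite -mulmxA mxE /dot; apply: eq_bigr => i _; rewrite mxE //.
Qed.

Lemma Pbound k (P : 'M[R]_k) mu : 0 <= mu -> P^T = P -> loewner_le 0 P -> loewner_le P (mu%:M) ->
  forall v, vnorm2 (P *m v) <= mu * vnorm2 v.
Proof.
move=> mu0 sP P0 P1; apply: homog => x hx; apply: bil_bound => y hy.
have sym : forall u w : 'cV[R]_k, dot u (P *m w) = dot w (P *m u).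
  by move=> u w; rewrite dot_mulmx sP dotC.
have h1 := P1 (x + y); have h2 := P0 (x - y); have h3 := dotvv_ge0 (x - y).
rewrite !quadE mul0mx mul_scalar_mx dotZr dotr0 in h1 h2.
rewrite !(mulmxDr, mulmxBr, mulmxN, dotDl, dotDr, dotBl, dotBr, dotNl, dotNr) in h1 h2 h3.
rewrite (sym x y) (dotC y x) in h1 h2 h3.
have hx2 : dot x x <= 1 by rewrite -sq_vnorm2; have := vnorm2_ge0 x; nra.
have hy2 : dot y y <= 1 by rewrite -sq_vnorm2; have := vnorm2_ge0 y; nra.
nra.
Qed.

Lemma dot_col a b (y1 z1 : 'cV[R]_a) (y2 z2 : 'cV[R]_b) :
  dot (col_mx y1 y2) (col_mx z1 z2) = dot y1 z1 + dot y2 z2.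
Proof.
rewrite /dot big_split_ord /=; congr (_ + _); apply: eq_bigr => i _.
  by rewrite !col_mxEu.
by rewrite !col_mxEd.
Qed.

Lemma dotT p q (D : 'M[R]_(p, q)) u v : dot u (D^T *m v) = dot v (D *m u).
Proof. by rewrite dot_mulmx trmxK dotC. Qed.

Lemma tbound p q (D : 'M[R]_(p, q)) d :
  (forall v, vnorm2 (D *m v) <= d * vnorm2 v) ->
  forall u v, `|dot u (D *m v)| <= d * (vnorm2 u * vnorm2 v).
Proof.
move=> hD u v; apply: le_trans (CS _ _) _.
rewrite [d * _]mulrCA; apply: ler_wpM2l; [exact: vnorm2_ge0 | exact: hD].
Qed.

Lemma sbound (s t B : R) : `|t| <= B -> s * t <= `|s| * B.
Proof.
move=> h; apply: le_trans (ler_norm _) _; rewrite normrM.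
by apply: ler_wpM2l.
Qed.

Lemma ab_le1 (a1 a2 b1 b2 : R) : a1 ^+ 2 + a2 ^+ 2 <= 1 -> b1 ^+ 2 + b2 ^+ 2 <= 1 ->
  a1 * b1 + a2 * b2 <= 1.
Proof. move=> h1 h2; have := sqr_ge0 (a1 - b1); have := sqr_ge0 (a2 - b2); rewrite !expr2 in h1 h2 *; nra. Qed.

Lemma col_norm a b (x : 'cV[R]_(a + b)) :
  vnorm2 x <= 1 -> vnorm2 (usubmx x) ^+ 2 + vnorm2 (dsubmx x) ^+ 2 <= 1.
Proof.
move=> h; rewrite !sq_vnorm2 -dot_col vsubmxK -sq_vnorm2.
have := vnorm2_ge0 x; nra.
Qed.

Lemma Dnorm n m (dA : 'M[R]_n) (dB : 'M[R]_(n, m)) P Y mu :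
  0 <= mu -> P^T = P -> loewner_le 0 P -> loewner_le P (mu%:M) -> specnorm Y <= mu ->
  forall v, vnorm2 ((dA *m P - dB *m Y) *m v) <= (specnorm dA * mu + specnorm dB * mu) * vnorm2 v.
Proof.
move=> mu0 sP P0 P1 hY; apply: homog => x hx; apply: bil_bound => y hy.
rewrite mulmxBl -!mulmxA dotBr.
have ab : forall p' (M : 'M[R]_(n, p')) (N : 'M[R]_(p', n)) c,
    (forall v, vnorm2 (N *m v) <= c * vnorm2 v) -> 0 <= c ->
    `|dot y (M *m (N *m x))| <= specnorm M * c.
  move=> p' M N c hN c0.
  apply: le_trans (CS _ _) _.
  apply: le_trans (ler_piMl (vnorm2_ge0 _) hy) _.
  apply: le_trans (specnorm_homog _ _) _; apply: ler_wpM2l; first exact: specnorm_ge0.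
  apply: le_trans (hN x) _; exact: ler_piMr c0 hx.
have h1 := ab _ dA P mu (Pbound mu0 sP P0 P1) mu0.
have hY' : forall v, vnorm2 (Y *m v) <= mu * vnorm2 v.
  move=> v; apply: le_trans (specnorm_homog Y v) _; apply: ler_wpM2r => //; exact: vnorm2_ge0.
have h2 := ab _ dB Y mu hY' mu0.
have h3 := ler_norm (dot y (dA *m (P *m x))).
have h4 : - dot y (dB *m (Y *m x)) <= `|dot y (dB *m (Y *m x))| by rewrite -normrN ler_norm.
lra.
Qed.


Lemma subsub (V : zmodType) (a b g : V) : (a - g) - (b - g) = a - b.
Proof. by rewrite opprB addrA subrK. Qed.

Lemma blockB a (A1 B1 C1 D1 : 'M[R]_(a, a)) (A2 B2 C2 D2 : 'M[R]_(a, a)) :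
  block_mx A1 B1 C1 D1 - block_mx A2 B2 C2 D2 = block_mx (A1 - A2) (B1 - B2) (C1 - C2) (D1 - D2).
Proof. by rewrite opp_block_mx add_block_mx. Qed.

Lemma prod_le (d u v : R) : 0 <= d -> 0 <= u -> 0 <= v -> u <= 1 -> v <= 1 -> d * (u * v) <= d.
Proof. by move=> d0 u0 v0 u1 v1; apply: ler_piMr => //; apply: mulr_ile1. Qed.

Lemma trD p q (A B : 'M[R]_(p, q)) : (A + B)^T = A^T + B^T.
Proof. by apply/matrixP => i j; rewrite !mxE. Qed.
Lemma trN p q (A : 'M[R]_(p, q)) : (- A)^T = - A^T.
Proof. by apply/matrixP => i j; rewrite !mxE. Qed.

Lemma absle (t B : R) : `|t| <= B -> - B <= t /\ t <= B.
Proof. by rewrite ler_norml => /andP. Qed.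
Lemma leabs (t B : R) : - B <= t -> t <= B -> `|t| <= B.
Proof. by move=> h1 h2; rewrite ler_norml h1 h2. Qed.
End Aux.

Theorem lemma1 (R : realType) (V : normedModType R) (Xi : set V) (n m : nat)
  (At : V -> 'M[R]_n) (Bt : V -> 'M[R]_(n, m)) (LA LB : R)
  (hA : forall xi1 xi2, xi1 \in Xi -> xi2 \in Xi ->
          specnorm (At xi1 - At xi2) <= LA * `|xi1 - xi2|)
  (hB : forall xi1 xi2, xi1 \in Xi -> xi2 \in Xi ->
          specnorm (Bt xi1 - Bt xi2) <= LB * `|xi1 - xi2|)
  (alpha r theta mu : R) (halpha : 0 < alpha) (hr : 0 < r) (hmu : 0 < mu) :
  let L := 2 * mu * (LA + LB) * Num.max 1 (`|sin theta| + `|cos theta|) in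
  forall (P : 'M[R]_n) (Y : 'M[R]_(m, n)) (gamma : R),
    P^T = P -> loewner_le 0 P -> loewner_le P (mu%:M) -> specnorm Y <= mu ->
  forall xi1 xi2, xi1 \in Xi -> xi2 \in Xi ->
    [/\ specnorm (f1 alpha P Y gamma (At xi1) (Bt xi1)
                  - f1 alpha P Y gamma (At xi2) (Bt xi2)) <= L * `|xi1 - xi2|,
        specnorm (f2 r P Y gamma (At xi1) (Bt xi1)
                  - f2 r P Y gamma (At xi2) (Bt xi2)) <= L * `|xi1 - xi2| &
        specnorm (f3 theta P Y gamma (At xi1) (Bt xi1)
                  - f3 theta P Y gamma (At xi2) (Bt xi2)) <= L * `|xi1 - xi2|].
Proof.
move=> L P Y gamma sP P0 P1 hY xi1 xi2 h1 h2.
have mu0 : 0 <= mu := ltW hmu.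
have hDn := Dnorm (At xi1 - At xi2) (Bt xi1 - Bt xi2) mu0 sP P0 P1 hY.
have hsa := hA _ _ h1 h2; have hsb := hB _ _ h1 h2.
have sa0 := specnorm_ge0 (At xi1 - At xi2); have sb0 := specnorm_ge0 (Bt xi1 - Bt xi2).
have eX : Xmat (At xi1) (Bt xi1) P Y = Xmat (At xi2) (Bt xi2) P Y +
    ((At xi1 - At xi2) *m P - (Bt xi1 - Bt xi2) *m Y).
  rewrite /Xmat !mulmxBl.
  move: (At xi1 *m P) (At xi2 *m P) (Bt xi1 *m Y) (Bt xi2 *m Y) => a1 a2 b1 b2.
  by apply/matrixP => i j; rewrite !mxE; ring.
move: hDn eX; set D := (_ *m P - _ *m Y); move: (specnorm (At xi1 - At xi2)) (specnorm (Bt xi1 - Bt xi2)) hsa hsb sa0 sb0 => sa sb hsa hsb sa0 sb0.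
move=> hDn eX; clearbody D.
have tb := tbound hDn.
set d := sa * mu + sb * mu in tb.
have d0 : 0 <= d by rewrite /d; nra.
set M := Num.max 1 (`|sin theta| + `|cos theta|).
have M1 : 1 <= M by rewrite /M le_max lexx.
have M2 : `|sin theta| + `|cos theta| <= M by rewrite /M le_max lexx orbT.
have nd0 := normr_ge0 (xi1 - xi2).
have hL : 2 * d * M <= L * `|xi1 - xi2|.
  have hd : d <= mu * (LA + LB) * `|xi1 - xi2|.
    rewrite /d; have := ler_wpM2l mu0 hsa; have := ler_wpM2l mu0 hsb; nra.
  have M0 : 0 <= M by apply: le_trans M1.
  have := ler_wpM2r M0 hd; rewrite /L -/M; nra.
rewrite /f1 /f2 /f3 /= eX.
move: (Xmat (At xi2) (Bt xi2) P Y) => X.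
have L2 : 2 * d <= L * `|xi1 - xi2|.
  apply: le_trans hL; have := ler_wpM2l (mulr_ge0 (ler0n _ 2) d0) M1; lra.
split.
- apply: specnorm_le => x hx; apply: bil_bound => y hy.
  rewrite !(mulmxDl, mulNmx, trD, trN) !(dotDr, dotNr, dotT).
  apply: (@le_trans _ _ (dot y (D *m x) + dot x (D *m y))).
    by rewrite le_eqVlt; apply/orP; left; apply/eqP; ring.
  have [g1 g1'] := absle (tb y x); have [g2 g2'] := absle (tb x y).
  have k1 := prod_le d0 (vnorm2_ge0 y) (vnorm2_ge0 x) hy hx.
  have k2 := prod_le d0 (vnorm2_ge0 x) (vnorm2_ge0 y) hx hy.
  lra.
- rewrite subsub blockB.
  apply: specnorm_le => x hx; apply: bil_bound => y hy.
  have cx := col_norm hx; have cy := col_norm hy.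
  rewrite -(vsubmxK x) -(vsubmxK y) mul_block_col dot_col.
  move: (usubmx x) (dsubmx x) (usubmx y) (dsubmx y) cx cy => x1 x2 y1 y2 cx cy.
  rewrite !(mulmxDl, mulNmx) !(trD, trN, mulmxDl, mulNmx) !(dotDr, dotNr, dotT).
  apply: (@le_trans _ _ (dot y1 (D *m x2) + dot x1 (D *m y2))).
    by rewrite le_eqVlt; apply/orP; left; apply/eqP; ring.
  have [g1 g1'] := absle (tb y1 x2); have [g2 g2'] := absle (tb x1 y2).
  have cx' : vnorm2 x2 ^+ 2 + vnorm2 x1 ^+ 2 <= 1 by rewrite addrC.
  have k2 := ler_wpM2l d0 (ab_le1 cx' cy).
  lra.
- rewrite subsub blockB.
  apply: specnorm_le => x hx; apply: bil_bound => y hy.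
  have cx := col_norm hx; have cy := col_norm hy.
  rewrite -(vsubmxK x) -(vsubmxK y) mul_block_col dot_col.
  move: (usubmx x) (dsubmx x) (usubmx y) (dsubmx y) cx cy => x1 x2 y1 y2 cx cy.
  rewrite !(mulmxDl, mulNmx) -!scalemxAl !(trD, trN, mulmxDl, mulNmx) !(dotDr, dotNr, dotZr, dotT).
  pose T1 := dot y1 (D *m x1) + dot x1 (D *m y1) + dot y2 (D *m x2) + dot x2 (D *m y2).
  pose T2 := dot y1 (D *m x2) - dot x2 (D *m y1) + dot x1 (D *m y2) - dot y2 (D *m x1).
  apply: (@le_trans _ _ (sin theta * T1 + cos theta * T2)).
    by rewrite le_eqVlt; apply/orP; left; apply/eqP; rewrite /T1 /T2; ring.
  have [g1 g1'] := absle (tb y1 x1); have [g2 g2'] := absle (tb x1 y1).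
  have [g3 g3'] := absle (tb y2 x2); have [g4 g4'] := absle (tb x2 y2).
  have [g5 g5'] := absle (tb y1 x2); have [g6 g6'] := absle (tb x2 y1).
  have [g7 g7'] := absle (tb x1 y2); have [g8 g8'] := absle (tb y2 x1).
  have k1 := ler_wpM2l d0 (ab_le1 cx cy).
  have cx' : vnorm2 x2 ^+ 2 + vnorm2 x1 ^+ 2 <= 1 by rewrite addrC.
  have k2 := ler_wpM2l d0 (ab_le1 cx' cy).
  have B1 : `|T1| <= 2 * d by apply: leabs; rewrite /T1; lra.
  have B2 : `|T2| <= 2 * d by apply: leabs; rewrite /T2; lra.
  have S1 := sbound (sin theta) B1; have S2 := sbound (cos theta) B2.
  have := ler_wpM2r (mulr_ge0 (ler0n _ 2) d0) M2.
  lra.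
Qed.
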